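(* Let $n\ge 1$ and $k\ge 3$ be integers and $p:=k-2$. Let $\{v_1,\dots,v_n\}$ be an orthonormal basis of $\mathbb{R}^n$ and $\lambda_r,\kappa_r\in\mathbb{R}$ with $\kappa_r<0$ for all $r$. Let $\mathcal A=\sum_{r=1}^n\lambda_r v_r^{\otimes k}$, $K=\sum_{r=1}^n\kappa_r v_rv_r^\top$, and consider $\dot x=Kx+\mathcal A x^{k-1}$ with initial condition $x(0)=x_0$ and modal coordinates $y_r(t)=v_r^\top x(t)$. Let $\mathcal I_+:=\{r:\lambda_r>0\}$, $\mathcal I_-:=\{r:\lambda_r<0\}$; for $r\in\mathcal I_+$ let $c_r:=(-\kappa_r/\lambda_r)^{1/p}>0$, and for $p$ odd and $r\in\mathcal I_-$ let $c_r:=-(\kappa_r/\lambda_r)^{1/p}<0$. (i) If $p$ is even and there exists $r\in\mathcal I_+$ with $|v_r^\top x_0|>c_r$, then the solution escapes to infinity in finite time. (ii) If $p$ is odd: if there exists $r\in\mathcal I_+$ with $v_r^\top x_0>c_r$, then the solution escapes in finite time with $y_r(t)\to+\infty$; moreover, for $r\in\mathcal I_+$, any initial condition with $v_r^\top x_0<c_r$ (in particular any $v_r^\top x_0<0$) yields a forward-complete mode $y_r$ converging to $0$. If there exists $r\in\mathcal I_-$ with $v_r^\top x_0<c_r$, then the solution escapes in finite time with $y_r(t)\to-\infty$. In all cases, the (first) finite-time escape time is $T_{\mathrm{esc}}=\min_{r} T_{\mathrm{esc},r}$, where for each mode $r$ with $\lambda_r\neq 0$ whose initial value $y_{r,0}:=v_r^\top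 x_0$ satisfies one of the escape conditions above, $$T_{\mathrm{esc},r}=\frac{1}{p|\kappa_r|}\ln\!\left(\frac{\lambda_r/|\kappa_r|}{\lambda_r/|\kappa_r|-y_{r,0}^{-p}}\right),$$ and $T_{\mathrm{esc},r}=+\infty$ for modes that satisfy no escape condition.
   Context: For $v\in\mathbb{R}^n$, $v^{\otimes k}$ is the $k$th-order tensor with entries $(v^{\otimes k})_{i_1\cdots i_k}=v_{i_1}\cdots v_{i_k}$. For a $k$th-order tensor $\mathcal A=(a_{i_1\cdots i_k})$ and $x\in\mathbb{R}^n$, $(\mathcal A x^{k-1})_i=\sum_{i_2,\dots,i_k=1}^n a_{i i_2\cdots i_k}x_{i_2}\cdots x_{i_k}$. Escape to infinity in finite time means $\|x(t)\|_2\to\infty$ as $t$ approaches a finite time. *)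

(* Defs.v *)
From HB Require Import structures.
From mathcomp Require Import all_boot all_order all_algebra.
From mathcomp Require Import all_classical all_reals all_analysis.
Set Implicit Arguments. Unset Strict Implicit. Unset Printing Implicit Defensive.
Import Order.TTheory GRing.Theory Num.Theory numFieldNormedType.Exports.
Local Open Scope ring_scope.
Local Open Scope classical_set_scope.

Definition tensor (R : Type) (n k : nat) := k.-tuple 'I_n -> R.

Definition tpow {R : comNzRingType} {n : nat} (k : nat) (v : 'cV[R]_n) : tensor R n k :=
  fun idx => \prod_(m < k) v (tnth idx m) 0.

(* (A x^{k-1})_i = sum_{i_2..i_k} a_{i i_2 .. i_k} x_{i_2} ... x_{i_k}, for k = q+1 *)
Definition tapply {R : comNzRingType} {n q : nat} (A : tensor R n q.+1) (x : 'cV[R]_n)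
  : 'cV[R]_n :=
  \col_i \sum_(j : q.-tuple 'I_n) A (cons_tuple i j) * \prod_(m < q) x (tnth j m) 0.

Definition dotv {R : comNzRingType} {n : nat} (u w : 'cV[R]_n) : R :=
  \sum_i u i 0 * w i 0.
Definition norm2 {R : rcfType} {n : nat} (u : 'cV[R]_n) : R := Num.sqrt (dotv u u).

(* {v_1,..,v_n} orthonormal (n orthonormal vectors in R^n form a basis) *)
Definition orthonormal_family {R : comNzRingType} {n : nat} (v : 'I_n -> 'cV[R]_n) : Prop :=
  forall r s, dotv (v r) (v s) = (r == s)%:R.

Definition Kmat {R : comNzRingType} {n : nat} (kappa : 'I_n -> R) (v : 'I_n -> 'cV[R]_n)
  : 'M[R]_n := \sum_r kappa r *: (v r *m (v r)^T).

Definition Atens {R : comNzRingType} {n : nat} (k : nat) (lam : 'I_n -> R)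
  (v : 'I_n -> 'cV[R]_n) : tensor R n k :=
  fun idx => \sum_r lam r * @tpow R n k (v r) idx.

Definition vfield {R : comNzRingType} {n : nat} (p : nat) (K : 'M[R]_n)
  (A : tensor R n p.+2) (x : 'cV[R]_n) : 'cV[R]_n :=
  K *m x + tapply A x.

Definition is_solution {R : realType} {n : nat} (F : 'cV[R]_n -> 'cV[R]_n)
  (x0 : 'cV[R]_n) (T : R) (x : R -> 'cV[R]_n) : Prop :=
  [/\ x 0 = x0,
      {within `[0, T[, continuous x} &
      forall t, 0 < t < T -> is_derive t 1 x (F (x t))].

Definition cplus {R : realType} (p : nat) (lam kappa : R) : R :=
  (- kappa / lam) `^ (p%:R^-1).
Definition cminus {R : realType} (p : nat) (lam kappa : R) : R :=
  - ((kappa / lam) `^ (p%:R^-1)).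

Definition escape_cond {R : realType} (p : nat) (lam kappa y0 : R) : Prop :=
  if odd p then (0 < lam /\ cplus p lam kappa < y0) \/
                (lam < 0 /\ y0 < cminus p lam kappa)
  else 0 < lam /\ cplus p lam kappa < `|y0|.

Definition Tesc_mode {R : realType} (p : nat) (lam kappa y0 : R) : R :=
  (p%:R * `|kappa|)^-1 *
  ln ((lam / `|kappa|) / (lam / `|kappa| - y0 ^- p)).

(* Main.v *)
Require Import Defs.
From HB Require Import structures.
From mathcomp Require Import all_boot all_order all_algebra.
From mathcomp Require Import all_classical all_reals all_analysis.
From mathcomp Require Import ring lra.
Import Order.TTheory GRing.Theory Num.Theory numFieldNormedType.Exports.
Local Open Scope ring_scope.
Local Open Scope classical_set_scope.

Section Scalar.
Context {R : realType}.
Implicit Types a b t x c y w lam kappa : R.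

Lemma is_derive_cont (f : R -> R) t df : is_derive t 1 f df -> {for t, continuous f}.
Proof. by move=> [H _]; apply/differentiable_continuous; rewrite -derivable1_diffP. Qed.

Lemma near_left_of_nbhs (T : R) (P : R -> Prop) :
  (\forall t \near T, P t) -> \forall t \near T^'-, P t.
Proof. by move=> h; apply: filterS h => t Pt _. Qed.

Lemma near_left_lt (T : R) : \forall t \near T^'-, t < T.
Proof. exact: withinT. Qed.

Definition Dfun (a b : R) (p : nat) t := 1 - b * (1 - expR (- (p%:R * a) * t)).

Lemma is_derive_D a b p t :
  is_derive t 1 (Dfun a b p) (- b * (p%:R * a) * expR (- (p%:R * a) * t)).
Proof.
rewrite /Dfun.
apply: is_derive_eq.
rewrite -[_%:A]/(_ *: 1) -[b *: _]/(b * _) [_ *: 1]mulr1.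
ring.
Qed.

Definition Yfun (a b y0 : R) (p : nat) t :=
  y0 * expR (- a * t) * expR (- ln (Dfun a b p t) / p%:R).

Lemma is_derive_Y a b y0 lam p t : 0 < a -> (0 < p)%N -> 0 < Dfun a b p t ->
  lam * y0 ^+ p = a * b ->
  is_derive t 1 (Yfun a b y0 p) (- a * Yfun a b y0 p t + lam * Yfun a b y0 p t ^+ p.+1).
Proof.
move=> a0 p0 Dt hl.
have hD := is_derive_D a b p t.
have hL : is_derive t 1 (@ln R \o Dfun a b p) _ := is_derive1_comp (is_derive1_ln Dt) hD.
rewrite /Yfun.
apply: is_derive_eq.
have sc : forall x y : R, x *: y = x * y by [].
rewrite !sc mulr0 add0r mulr1.
set D := Dfun a b p t; set E1 := expR (- a * t); set E2 := expR (- ln D / p%:R).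
set F := expR (- (p%:R * a) * t).
have pn0 : p%:R != 0 :> R by rewrite pnatr_eq0 -lt0n.
have hE1 : E1 ^+ p = F by rewrite /E1 /F -expRM_natl; congr expR; ring.
have hE2 : E2 ^+ p = D^-1.
  rewrite /E2 -expRM_natl mulrCA divff // mulr1 expRN lnK //.
rewrite exprS !exprMn hE1 hE2.
have -> : lam * (y0 * E1 * E2 * (y0 ^+ p * F * D^-1)) =
  (lam * y0 ^+ p) * (y0 * E1 * E2 * F * D^-1) by ring.
rewrite hl; field.
by rewrite pn0 /= gt_eqF.
Qed.

Lemma powR_invK x p : 0 <= x -> (0 < p)%N -> (x `^ p%:R^-1) ^+ p = x.
Proof.
move=> x0 p0; rewrite -powR_mulrn ?powR_ge0 // -powRrM mulVf ?powRr1 //.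
by rewrite pnatr_eq0 -lt0n.
Qed.

Lemma odd_lt_iff {c} y {p} : odd p -> 0 < c -> (c < y) = (c ^+ p < y ^+ p).
Proof.
move=> op c0; have p0 : (0 < p)%N by case: p op.
have [y0|y0] := leP 0 y.
  by rewrite ltr_pXn2r // ?qualifE /= ?ltW.
rewrite (_ : (c < y) = false); last by apply/negbTE; rewrite -leNgt ltW // (lt_trans y0 c0).
apply/esym/negbTE; rewrite -leNgt.
apply: (@le_trans _ _ 0); first by rewrite exprn_odd_le0 // ltW.
by rewrite exprn_ge0 // ltW.
Qed.

Lemma even_lt_iff {c} y {p} : ~~ odd p -> (0 < p)%N -> 0 <= c -> (c < `|y|) = (c ^+ p < y ^+ p).
Proof.
move=> ep p0 c0.
have -> : y ^+ p = `|y| ^+ p by rewrite -normrX ger0_norm // exprn_even_ge0.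
by rewrite ltr_pXn2r // qualifE /=.
Qed.

Lemma cplus_lt lam kappa p w : (0 < p)%N -> kappa < 0 -> 0 < lam ->
  (cplus p lam kappa ^+ p < w) = (- kappa < lam * w).
Proof.
move=> p0 k0 l0; rewrite /cplus powR_invK //; last by rewrite divr_ge0 // ?oppr_ge0 ltW.
by rewrite ltr_pdivrMr // mulrC.
Qed.

Lemma cplus_gt0 {lam kappa} p : kappa < 0 -> 0 < lam -> 0 < cplus p lam kappa.
Proof. by move=> k0 l0; rewrite /cplus powR_gt0 // divr_gt0 // oppr_gt0. Qed.

Lemma escape_iff p lam kappa (y0 : R) : (0 < p)%N -> kappa < 0 ->
  escape_cond p lam kappa y0 <-> - kappa < lam * y0 ^+ p.
Proof.
move=> p0 k0; rewrite /escape_cond; case: ifP => op.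
  have [l0|l0|->] := ltrgt0P lam.
  - rewrite (odd_lt_iff y0 op (cplus_gt0 p k0 l0)) cplus_lt //.
    split; [by case=> [[_ h]|[h _]] //; move: h; rewrite ltNge ltW|by move=> h; left].
  - have l0' : 0 < - lam by rewrite oppr_gt0.
    have -> : cminus p lam kappa = - cplus p (- lam) kappa.
      by rewrite /cminus /cplus invrN mulrNN.
    have -> : lam * y0 ^+ p = - lam * (- y0) ^+ p.
      by rewrite exprNn -signr_odd op expr1 mulN1r mulrNN.
    rewrite -(cplus_lt _ _ _ _ p0 k0 l0') -(odd_lt_iff (- y0) op (cplus_gt0 p k0 l0')) ltrNr.
    split; [by case=> [[h _]|[_ h]] //; move: h; rewrite ltNge ltW|by move=> h; right].
  - rewrite mul0r; split; last by rewrite ltNge oppr_ge0 ltW.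
    by case=> [[]|[]].
have [l0|l0] := ltP 0 lam.
  rewrite (even_lt_iff y0 (negbT op) p0 (ltW (cplus_gt0 p k0 l0))) cplus_lt //.
  by split; [case|].
split; first by case.
move=> h; exfalso; move: h; apply/negP; rewrite -leNgt.
apply: (@le_trans _ _ 0); last by rewrite oppr_ge0 ltW.
by rewrite mulr_le0_ge0 // exprn_even_ge0 // negbT.
Qed.

Definition Tb (a b : R) (p : nat) := (p%:R * a)^-1 * ln (b / (b - 1)).

Lemma F_Tb a b p : 0 < a -> (0 < p)%N -> 1 < b ->
  expR (- (p%:R * a) * Tb a b p) = (b - 1) / b.
Proof.
move=> a0 p0 b1; have pa : 0 < p%:R * a by rewrite mulr_gt0 // ltr0n.
rewrite /Tb mulNr mulrA mulfV ?gt_eqF // mul1r expRN lnK ?invf_div //.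
by rewrite posrE divr_gt0 // ?subr_gt0 // (lt_trans ltr01).
Qed.

Lemma D_Tb a b p : 0 < a -> (0 < p)%N -> 1 < b -> Dfun a b p (Tb a b p) = 0.
Proof.
move=> a0 p0 b1; rewrite /Dfun F_Tb //; field.
by rewrite gt_eqF // (lt_trans ltr01).
Qed.

Lemma Tb_gt0 a b p : 0 < a -> (0 < p)%N -> 1 < b -> 0 < Tb a b p.
Proof.
move=> a0 p0 b1; have pa : 0 < p%:R * a by rewrite mulr_gt0 // ltr0n.
have b0 : 0 < b by rewrite (lt_trans ltr01).
rewrite /Tb mulr_gt0 ?invr_gt0 // ln_gt0 // ltr_pdivlMr ?subr_gt0 // mul1r.
by rewrite ltrBlDr ltrDl.
Qed.

Lemma D_pos_lt a b p t : 0 < a -> (0 < p)%N -> 1 < b -> t < Tb a b p -> 0 < Dfun a b p t.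
Proof.
move=> a0 p0 b1 tT; have pa : 0 < p%:R * a by rewrite mulr_gt0 // ltr0n.
have b0 : 0 < b by rewrite (lt_trans ltr01).
have : expR (- (p%:R * a) * Tb a b p) < expR (- (p%:R * a) * t).
  by rewrite ltr_expR !mulNr ltrN2 ltr_pM2l.
rewrite F_Tb // /Dfun => h.
have : (b - 1) < b * expR (- (p%:R * a) * t) by rewrite mulrC -ltr_pdivrMr.
lra.
Qed.

Lemma D_pos_small a b p t : 0 < a -> (0 < p)%N -> b <= 1 -> 0 <= t -> 0 < Dfun a b p t.
Proof.
move=> a0 p0 b1 t0; have pa : 0 < p%:R * a by rewrite mulr_gt0 // ltr0n.
have F0 := expR_gt0 (- (p%:R * a) * t).
have F1 : expR (- (p%:R * a) * t) <= 1.
  by rewrite expR_le1 mulNr oppr_le0 mulr_ge0 // ltW.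
rewrite /Dfun.
have : 0 <= (1 - b) * (1 - expR (- (p%:R * a) * t)) by rewrite mulr_ge0 // subr_ge0.
nra.
Qed.

Lemma Y0 a b y0 p : Yfun a b y0 p 0 = y0.
Proof. by rewrite /Yfun /Dfun !mulr0 expR0 subrr mulr0 subr0 ln1 oppr0 mul0r expR0 !mulr1. Qed.

Lemma E2_pow a b p t : (0 < p)%N -> 0 < Dfun a b p t ->
  expR (- ln (Dfun a b p t) / p%:R) ^+ p = (Dfun a b p t)^-1.
Proof.
move=> p0 Dt; have pn0 : p%:R != 0 :> R by rewrite pnatr_eq0 -lt0n.
by rewrite -expRM_natl mulrCA divff // mulr1 expRN lnK.
Qed.

Lemma Y_blow a b y0 p : 0 < a -> (0 < p)%N -> 1 < b -> y0 != 0 ->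
  forall A, \forall t \near (Tb a b p)^'-,
    A <= `|y0| * expR (- a * t) * expR (- ln (Dfun a b p t) / p%:R).
Proof.
move=> a0 p0 b1 y0n0 A.
have [A0|A0] := leP A 0.
  by apply: nearW => t; rewrite (le_trans A0) // !mulr_ge0 // ?expR_ge0.
set T := Tb a b p.
set m1 := expR (- a * T).
have m10 : 0 < m1 := expR_gt0 _.
have y0p : 0 < `|y0| by rewrite normr_gt0.
set M := A / (`|y0| * m1).
have M0 : 0 < M by rewrite divr_gt0 // mulr_gt0.
set eps := (M ^+ p)^-1.
have eps0 : 0 < eps by rewrite invr_gt0 exprn_gt0.
have cD := @is_derive_cont _ _ _ (is_derive_D a b p T).
move: cD => /cvgrPdist_lt /(_ eps eps0) /near_left_of_nbhs hD.
apply: filterS (filterI hD (near_left_lt T)) => t [hDt tT].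
rewrite D_Tb // sub0r normrN in hDt.
have Dt := D_pos_lt _ _ _ _ a0 p0 b1 tT.
rewrite gtr0_norm // in hDt.
have E1 : m1 <= expR (- a * t) by rewrite ler_expR !mulNr lerN2 ler_pM2l // ltW.
have E2 : M <= expR (- ln (Dfun a b p t) / p%:R).
  rewrite -(ler_pXn2r p0) ?qualifE /= ?expR_ge0 ?ltW // E2_pow //.
  by rewrite -(invrK (M ^+ p)) ltf_pV2 ?posrE.
have -> : A = `|y0| * m1 * M by rewrite /M mulrC divfK // gt_eqF // mulr_gt0.
apply: ler_pM => //; [exact: mulr_ge0 (ltW y0p) (ltW m10) | exact: ltW M0 | apply: ler_pM => //; exact: ltW].
Qed.

Lemma Y_fwd a b y0 p : 0 < a -> (0 < p)%N -> b < 1 ->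
  Yfun a b y0 p t @[t --> +oo] --> 0.
Proof.
move=> a0 p0 b1.
have pa : 0 < p%:R * a by rewrite mulr_gt0 // ltr0n.
set m := Num.min 1 (1 - b).
have m0 : 0 < m by rewrite lt_min ltr01 subr_gt0.
have Dm : forall t, 0 <= t -> m <= Dfun a b p t.
  move=> t t0; rewrite ge_min; apply/orP.
  have F0 := expR_gt0 (- (p%:R * a) * t).
  have F1 : expR (- (p%:R * a) * t) <= 1.
    by rewrite expR_le1 mulNr oppr_le0 mulr_ge0 // ltW.
  rewrite /Dfun; case: (leP 0 b) => hb; [right|left]; nra.
set B := expR (- ln m / p%:R).
have B0 : 0 < B := expR_gt0 _.
have E2B : forall t, 0 <= t -> expR (- ln (Dfun a b p t) / p%:R) <= B.
  move=> t t0; rewrite ler_expR ler_wpM2r ?invr_ge0 ?ler0n // lerN2.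
  by rewrite ler_ln ?posrE ?Dm // (lt_le_trans m0) ?Dm.
apply/cvgrPdist_lt => e e0.
set K := `|y0| * B + 1.
have K0 : 0 < K by rewrite ltr_wpDl ?mulr_ge0 ?normr_ge0 ?ltW.
set d := e / K.
have d0 : 0 < d by rewrite divr_gt0.
have h1 := nbhs_pinfty_gt (num_real (0:R)).
have h2 := nbhs_pinfty_gt (num_real (- ln d / a : R)).
apply: filterS (filterI h1 h2) => t [t0 td].
rewrite sub0r normrN /Yfun !normrM (gtr0_norm (expR_gt0 _)) (gtr0_norm (expR_gt0 _)).
have E1d : expR (- a * t) < d.
  rewrite -[d]lnK ?posrE // ltr_expR mulNr ltrNl -ltr_pdivrMl //.
  by rewrite mulrC.
apply: (@le_lt_trans _ _ (K * expR (- a * t))); last first.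
  have : K * expR (- a * t) < K * d by rewrite ltr_pM2l.
  by move=> h; apply: (lt_le_trans h); rewrite /d mulrC divfK ?gt_eqF.
rewrite /K mulrDl mul1r -mulrA [_ * expR (- a * t)]mulrC mulrA.
rewrite -[X in X <= _]addr0 lerD ?expR_ge0 //.
rewrite [X in _ <= X]mulrCA [X in _ <= X]mulrA ler_wpM2l ?mulr_ge0 ?normr_ge0 ?expR_ge0 //.
by rewrite E2B // ltW.
Qed.
End Scalar.


Section Vec.
Variables (R : realType) (n : nat).

Lemma tuple_sum_prod q (f : 'I_n -> R) :
  \sum_(j : q.-tuple 'I_n) \prod_(m < q) f (tnth j m) = (\sum_i f i) ^+ q.
Proof.
have -> : (\sum_i f i) ^+ q = \prod_(m < q) \sum_(i : 'I_n) f i.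
  by rewrite prodr_const card_ord.
rewrite bigA_distr_bigA /=.
rewrite (reindex (fun j : q.-tuple 'I_n => [ffun m => tnth j m])) /=.
  by apply: eq_bigr => j _; apply: eq_bigr => m _; rewrite ffunE.
exists (fun g : {ffun 'I_q -> 'I_n} => [tuple g m | m < q]) => [j _|g _].
  by apply: eq_from_tnth => m; rewrite tnth_mktuple ffunE.
by apply/ffunP => m; rewrite ffunE tnth_mktuple.
Qed.


Lemma tapply_Atens p (lam : 'I_n -> R) (v : 'I_n -> 'cV[R]_n) (X : 'cV[R]_n) i :
  tapply (@Atens R n p.+2 lam v) X i 0 = \sum_r lam r * dotv (v r) X ^+ p.+1 * v r i 0.
Proof.
rewrite /tapply mxE /Atens.
under eq_bigr do rewrite big_distrl /=.
rewrite exchange_big /=; apply: eq_bigr => r _.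
rewrite /dotv -tuple_sum_prod big_distrr big_distrl /=; apply: eq_bigr => j _.
rewrite /tpow big_ord_recl tnth0 /=.
rewrite [in RHS]big_split /=.
have -> : \prod_(m < p.+1) v r (tnth [tuple of i :: j] (lift ord0 m)) 0 =
          \prod_(m < p.+1) v r (tnth j m) 0.
  by apply: eq_bigr => m _; rewrite tnthS.
ring.
Qed.

Lemma Kmat_mul (kappa : 'I_n -> R) (v : 'I_n -> 'cV[R]_n) (X : 'cV[R]_n) i :
  (Kmat kappa v *m X) i 0 = \sum_r kappa r * dotv (v r) X * v r i 0.
Proof.
rewrite /Kmat mxE.
under eq_bigr do rewrite summxE big_distrl /=.
rewrite exchange_big /=; apply: eq_bigr => r _.
rewrite /dotv big_distrr big_distrl /=; apply: eq_bigr => k _.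
rewrite !mxE big_ord1 !mxE; ring.
Qed.

Lemma vfield_comb p (kappa lam : 'I_n -> R) (v : 'I_n -> 'cV[R]_n) (X : 'cV[R]_n) :
  @vfield R n p (Kmat kappa v) (@Atens R n p.+2 lam v) X =
  \sum_r (kappa r * dotv (v r) X + lam r * dotv (v r) X ^+ p.+1) *: v r.
Proof.
apply/matrixP => i j; rewrite (ord1 j) /vfield mxE Kmat_mul tapply_Atens summxE.
rewrite -big_split /=; apply: eq_bigr => r _; rewrite mxE; ring.
Qed.

Lemma dotv_sum (u : 'cV[R]_n) (c : 'I_n -> R) (w : 'I_n -> 'cV[R]_n) :
  dotv u (\sum_r c r *: w r) = \sum_r c r * dotv u (w r).
Proof.
rewrite /dotv.
under eq_bigr do rewrite summxE big_distrr /=.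
rewrite exchange_big /=; apply: eq_bigr => r _.
rewrite big_distrr /=; apply: eq_bigr => k _; rewrite mxE; ring.
Qed.

Lemma dotvC (u w : 'cV[R]_n) : dotv u w = dotv w u.
Proof. by apply: eq_bigr => k _; rewrite mulrC. Qed.

Lemma dotv_onb (v : 'I_n -> 'cV[R]_n) (c : 'I_n -> R) s :
  orthonormal_family v -> dotv (v s) (\sum_r c r *: v r) = c s.
Proof.
move=> hv; rewrite dotv_sum (bigD1 s) //= hv eqxx mulr1 big1 ?addr0 // => r rs.
by rewrite hv eq_sym (negbTE rs) mulr0.
Qed.

Lemma dotv_self (v : 'I_n -> 'cV[R]_n) (c : 'I_n -> R) :
  orthonormal_family v ->
  dotv (\sum_r c r *: v r) (\sum_r c r *: v r) = \sum_r c r ^+ 2.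
Proof.
move=> hv; rewrite dotv_sum; apply: eq_bigr => r _.
by rewrite dotvC dotv_onb // expr2.
Qed.

Lemma norm2_ge (v : 'I_n -> 'cV[R]_n) (c : 'I_n -> R) s :
  orthonormal_family v -> `|c s| <= norm2 (\sum_r c r *: v r).
Proof.
move=> hv; rewrite /norm2 dotv_self // -sqrtr_sqr ler_sqrt ?sumr_ge0 // => [|r _].
  rewrite (bigD1 s) //= lerDl sumr_ge0 // => r _; exact: sqr_ge0.
exact: sqr_ge0.
Qed.

Lemma onb_expand (v : 'I_n -> 'cV[R]_n) (x0 : 'cV[R]_n) :
  orthonormal_family v -> x0 = \sum_r dotv (v r) x0 *: v r.
Proof.
move=> hv.
set V : 'M[R]_n := \matrix_(i, j) v j i 0.
have h1 : V^T *m V = 1%:M.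
  apply/matrixP => r s; rewrite !mxE -hv /dotv; apply: eq_bigr => k _; rewrite !mxE.
  done.
have h2 := mulmx1C h1.
apply/matrixP => i j; rewrite (ord1 j) summxE.
have -> : x0 i 0 = \sum_k (1%:M : 'M[R]_n) i k * x0 k 0.
  rewrite (bigD1 i) //= mxE eqxx mul1r big1 ?addr0 // => k ki.
  by rewrite mxE eq_sym (negbTE ki) mul0r.
rewrite -h2; under eq_bigr do rewrite mxE big_distrl /=.
rewrite exchange_big /=; apply: eq_bigr => r _.
rewrite [RHS]mxE /dotv big_distrl /=; apply: eq_bigr => k _; rewrite !mxE; ring.
Qed.

Lemma is_derive_scalel (f : R -> R) (w : 'cV[R]_n) (t df : R) :
  is_derive t 1 f df -> is_derive t 1 (fun s => f s *: w) (df *: w).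
Proof.
move=> [hd <-].
have hdf : differentiable f t by apply/derivable1_diffP.
apply: DeriveDef; first by apply: diff_derivable; exact: differentiableZl.
rewrite deriveE; last exact: differentiableZl.
by rewrite diffZl // -deriveE.
Qed.

Lemma is_derive_comb (Y : 'I_n -> R -> R) (dY : 'I_n -> R) (v : 'I_n -> 'cV[R]_n) (t : R) :
  (forall r, is_derive t 1 (Y r) (dY r)) ->
  is_derive t 1 (fun s => \sum_r Y r s *: v r) (\sum_r dY r *: v r).
Proof.
move=> h.
have := is_derive_sum (fun r => @is_derive_scalel _ (v r) _ _ (h r)).
by rewrite fct_sumE.
Qed.
End Vec.


Lemma master (R : realType) (n p : nat) (hp : (0 < p)%N) (v : 'I_n -> 'cV[R]_n)
  (hv : orthonormal_family v) (lam kappa : 'I_n -> R) (hkappa : forall r, kappa r < 0)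
  (x0 : 'cV[R]_n) (r0 : 'I_n) :
  let y0 := fun r => dotv (v r) x0 in
  let b := fun r => lam r * y0 r ^+ p / (- kappa r) in
  1 < b r0 ->
  exists T, exists x,
    [/\ 0 < T, (exists2 r, 1 < b r & T = Tb (- kappa r) (b r) p),
        (forall r, 1 < b r -> T <= Tb (- kappa r) (b r) p) &
        is_solution (@vfield R n p (Kmat kappa v) (@Atens R n p.+2 lam v)) x0 T x] /\
    norm2 (x t) @[t --> T^'-] --> +oo /\
    (forall r, 1 < b r -> Tb (- kappa r) (b r) p = T ->
      (0 < y0 r -> dotv (v r) (x t) @[t --> T^'-] --> +oo) /\
      (y0 r < 0 -> dotv (v r) (x t) @[t --> T^'-] --> -oo)).
Proof.
move=> y0 b hb0.
set a := fun r => - kappa r.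
have a0 : forall r, 0 < a r by move=> r; rewrite /a oppr_gt0.
have hl : forall r, lam r * y0 r ^+ p = a r * b r.
  by move=> r; rewrite /b [RHS]mulrC /a divfK // gt_eqF // oppr_gt0.
set Tf := fun r => Tb (a r) (b r) p.
case: (@arg_minP _ _ _ r0 (fun i => 1 < b i) Tf hb0) => rs hrs hmin.
set T := Tf rs.
have T0 : 0 < T by apply: Tb_gt0.
have Dpos : forall r t, 0 <= t -> t < T -> 0 < Dfun (a r) (b r) p t.
  move=> r t t0 tT; have [br|br] := ltP 1 (b r).
    by apply: D_pos_lt => //; apply: (lt_le_trans tT); apply: hmin.
  exact: D_pos_small.
set Y := fun r => Yfun (a r) (b r) (y0 r) p.
set x := fun t => \sum_r Y r t *: v r.
have dx : forall r t, dotv (v r) (x t) = Y r t by move=> r t; rewrite dotv_onb.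
have derx : forall t, 0 <= t -> t < T ->
    is_derive t 1 x (@vfield R n p (Kmat kappa v) (@Atens R n p.+2 lam v) (x t)).
  move=> t t0 tT.
  rewrite vfield_comb.
  under eq_bigr do rewrite dx.
  apply: is_derive_comb => r.
  have := @is_derive_Y _ (a r) (b r) (y0 r) (lam r) p t (a0 r) hp (Dpos r t t0 tT) (hl r).
  by rewrite /a opprK.
exists T, x; split; last split.
- split.
- exact: T0.
- by exists rs.
- by move=> r /hmin.
- split.
  + rewrite /x; under eq_bigr do rewrite /Y Y0.
    by rewrite -onb_expand.
  + apply: derivable_within_continuous => t; rewrite in_itv /= => /andP[t0 tT].
    by case: (derx t t0 tT).
  + by move=> t /andP[t0 tT]; apply: derx => //; rewrite ltW.
- apply/cvgryPge => A.
  have ys0 : y0 rs != 0.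
    apply/eqP => h; move: hrs; rewrite /b h expr0n gtn_eqF //= mulr0 mul0r.
    by rewrite ltNge ler01.
  have := @Y_blow _ (a rs) (b rs) (y0 rs) p (a0 rs) hp hrs ys0 A.
  apply: filterS => t h; apply: (le_trans h); apply: (le_trans _ (@norm2_ge _ _ v (fun r => Y r t) rs hv)).
  by rewrite /Y /Yfun !normrM (gtr0_norm (expR_gt0 _)) (gtr0_norm (expR_gt0 _)).
- move=> r br Tr_eq.
  have yr0 : y0 r != 0.
    apply/eqP => h; move: br; rewrite /b h expr0n gtn_eqF //= mulr0 mul0r.
    by rewrite ltNge ler01.
  have hB : forall A, \forall t \near T^'-,
      A <= `|y0 r| * expR (- a r * t) * expR (- ln (Dfun (a r) (b r) p t) / p%:R).
    by move=> A; rewrite -Tr_eq; exact: (@Y_blow _ (a r) (b r) (y0 r) p (a0 r) hp br yr0 A).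
  have -> : (fun t => dotv (v r) (x t)) = Y r by apply/funext => t; rewrite dx.
  split => hy.
    apply/cvgryPge => A; apply: filterS (hB A) => t.
    by rewrite /Y /Yfun gtr0_norm.
  apply/cvgrNyPle => A; apply: filterS (hB (- A)) => t.
  by rewrite /Y /Yfun ltr0_norm // lerNl !mulNr opprK.
Qed.


Lemma esc_b (R : realType) p (lam kappa y0 : R) : (0 < p)%N -> kappa < 0 ->
  escape_cond p lam kappa y0 <-> 1 < lam * y0 ^+ p / - kappa.
Proof.
move=> p0 k0; rewrite escape_iff // ltr_pdivlMr ?mul1r //.
by rewrite oppr_gt0.
Qed.

Lemma Tesc_eq (R : realType) p (lam kappa y0 : R) : (0 < p)%N -> kappa < 0 ->
  1 < lam * y0 ^+ p / - kappa ->
  Tesc_mode p lam kappa y0 = Tb (- kappa) (lam * y0 ^+ p / - kappa) p.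
Proof.
move=> p0 k0 b1.
have y00 : y0 != 0.
  apply/eqP => h; move: b1; rewrite h expr0n gtn_eqF //= mulr0 mul0r.
  by rewrite ltNge ler01.
have kn0 : kappa != 0 by rewrite lt_eqF.
have yp0 : y0 ^+ p != 0 by rewrite expf_neq0.
set b := lam * y0 ^+ p / - kappa.
have bn1 : b - 1 != 0 by rewrite subr_eq0 gt_eqF.
rewrite /Tesc_mode /Tb ltr0_norm //.
have -> : lam / - kappa - y0 ^- p = (b - 1) / y0 ^+ p.
  by rewrite /b; field; rewrite yp0 kn0.
congr (_ * ln _); rewrite /b; field.
have hb' : - kappa < lam * y0 ^+ p.
  by move: b1; rewrite ltr_pdivlMr ?mul1r // oppr_gt0.
by rewrite kn0 yp0 andbT /= mulN1r subr_eq0 gt_eqF.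
Qed.
Theorem theorem3 (R : realType) (n : nat) (hn : (1 <= n)%N) (p : nat) (hp : (1 <= p)%N)
  (v : 'I_n -> 'cV[R]_n) (hv : orthonormal_family v)
  (lam kappa : 'I_n -> R) (hkappa : forall r, kappa r < 0)
  (x0 : 'cV[R]_n) :
  let F := @vfield R n p (Kmat kappa v) (@Atens R n p.+2 lam v) in
  let y0 := fun r => dotv (v r) x0 in
  let esc := fun r => escape_cond p (lam r) (kappa r) (y0 r) in
  let Tr := fun r => Tesc_mode p (lam r) (kappa r) (y0 r) in
  let escapes_at (T : R) (extra : (R -> 'cV[R]_n) -> Prop) :=
    [/\ 0 < T, (exists2 r, esc r & T = Tr r), (forall r, esc r -> T <= Tr r) &
        exists x, [/\ is_solution F x0 T x,
                      norm2 (x t) @[t --> T^'-] --> +oo & extra x]] in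
  [/\
   (* (i) *)
   (~~ odd p -> (exists r, 0 < lam r /\ cplus p (lam r) (kappa r) < `|y0 r|) ->
     exists T, escapes_at T (fun _ => True)),
   (* (ii), first claim *)
   (odd p -> (exists r, 0 < lam r /\ cplus p (lam r) (kappa r) < y0 r) ->
     exists T, escapes_at T (fun x => forall r, Tr r = T ->
        (0 < lam r /\ cplus p (lam r) (kappa r) < y0 r ->
           dotv (v r) (x t) @[t --> T^'-] --> +oo) /\
        (lam r < 0 /\ y0 r < cminus p (lam r) (kappa r) ->
           dotv (v r) (x t) @[t --> T^'-] --> -oo))),
   (* (ii), forward-complete modes *)
   (odd p -> forall r, 0 < lam r -> y0 r < cplus p (lam r) (kappa r) ->
     exists y : R -> R,
       [/\ y 0 = y0 r, {within `[0, +oo[, continuous y},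
           (forall t : R, 0 < t -> is_derive t 1 y (kappa r * y t + lam r * y t ^+ p.+1)) &
           y t @[t --> +oo] --> 0]) &
   (* (ii), last claim *)
   (odd p -> (exists r, lam r < 0 /\ y0 r < cminus p (lam r) (kappa r)) ->
     exists T, escapes_at T (fun x => forall r, Tr r = T ->
        (0 < lam r /\ cplus p (lam r) (kappa r) < y0 r ->
           dotv (v r) (x t) @[t --> T^'-] --> +oo) /\
        (lam r < 0 /\ y0 r < cminus p (lam r) (kappa r) ->
           dotv (v r) (x t) @[t --> T^'-] --> -oo)))].
Proof.
move=> F y0 esc Tr escapes_at.
set b := fun r => lam r * y0 r ^+ p / - kappa r.
have escb : forall r, esc r <-> 1 < b r by move=> r; exact: esc_b.
have TrE : forall r, esc r -> Tr r = Tb (- kappa r) (b r) p.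
  by move=> r /escb br; exact: Tesc_eq.
have gen : forall r0, esc r0 -> exists T, escapes_at T (fun x => forall r, esc r -> Tr r = T ->
      (0 < y0 r -> dotv (v r) (x t) @[t --> T^'-] --> +oo) /\
      (y0 r < 0 -> dotv (v r) (x t) @[t --> T^'-] --> -oo)).
  move=> r0 /escb br0.
  have [T [x [[T0 [rs brs hT] hmin sol] [lim extra]]]] := @master _ n p hp v hv lam kappa hkappa x0 r0 br0.
  exists T; split => //.
  - by exists rs; [apply/escb | rewrite TrE //; apply/escb].
  - by move=> r er; rewrite TrE //; apply: hmin; apply/escb.
  - exists x; split => // r er; rewrite TrE //; apply: extra; exact/escb.
have cplus_pos : forall r, 0 < lam r -> 0 < cplus p (lam r) (kappa r).
  by move=> r l0; apply: cplus_gt0.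
have cminus_npos : forall r, cminus p (lam r) (kappa r) <= 0.
  by move=> r; rewrite /cminus oppr_le0 powR_ge0.
have conv : odd p -> forall T, escapes_at T (fun x => forall r, esc r -> Tr r = T ->
      (0 < y0 r -> dotv (v r) (x t) @[t --> T^'-] --> +oo) /\
      (y0 r < 0 -> dotv (v r) (x t) @[t --> T^'-] --> -oo)) ->
    escapes_at T (fun x => forall r, Tr r = T ->
        (0 < lam r /\ cplus p (lam r) (kappa r) < y0 r ->
           dotv (v r) (x t) @[t --> T^'-] --> +oo) /\
        (lam r < 0 /\ y0 r < cminus p (lam r) (kappa r) ->
           dotv (v r) (x t) @[t --> T^'-] --> -oo)).
  move=> op T [T0 ex hmin [x [sol lim extra]]]; split => //.
  exists x; split => // r hT; split.
    move=> [l0 hc]; have er : esc r by rewrite /esc /escape_cond op; left.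
    by apply: (extra r er hT).1; apply: lt_trans hc; apply: cplus_pos.
  move=> [l0 hc]; have er : esc r by rewrite /esc /escape_cond op; right.
  by apply: (extra r er hT).2; apply: lt_le_trans hc (cminus_npos r).
split.
- move=> ep [r [l0 hc]].
  have er : esc r by rewrite /esc /escape_cond (negbTE ep).
  have [T [T0 ex hmin [x [sol lim _]]]] := gen r er.
  by exists T; split => //; exists x.
- move=> op [r [l0 hc]].
  have er : esc r by rewrite /esc /escape_cond op; left.
  have [T hT] := gen r er.
  by exists T; apply: conv.
- move=> op r l0 hc.
  have k0 : 0 < - kappa r by rewrite oppr_gt0.
  have bl : b r < 1.
    rewrite /b ltr_pdivrMr // mul1r.
    have [hy|hy] := leP (y0 r) 0.
      apply: (le_lt_trans _ k0); apply: mulr_ge0_le0; first exact: ltW.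
      by rewrite exprn_odd_le0.
    have : y0 r ^+ p < cplus p (lam r) (kappa r) ^+ p.
      by rewrite ltr_pXn2r // ?qualifE /= ?ltW // ?cplus_pos.
    rewrite /cplus powR_invK //; last by rewrite divr_ge0 ?ltW.
    by rewrite ltr_pdivlMr // mulrC.
  have hl : lam r * y0 r ^+ p = - kappa r * b r.
    by rewrite /b [RHS]mulrC divfK // gt_eqF.
  have Dp : forall t, 0 <= t -> 0 < Dfun (- kappa r) (b r) p t.
    by move=> t t0; apply: D_pos_small => //; rewrite ltW.
  exists (Yfun (- kappa r) (b r) (y0 r) p); split.
  + exact: Y0.
  + apply: derivable_within_continuous => t; rewrite in_itv /= andbT => t0.
    by case: (@is_derive_Y _ _ _ _ _ p t k0 hp (Dp t t0) hl).
  + move=> t t0; have := @is_derive_Y _ _ _ _ _ p t k0 hp (Dp t (ltW t0)) hl.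
    by rewrite opprK.
  + exact: Y_fwd.
- move=> op [r [l0 hc]].
  have er : esc r by rewrite /esc /escape_cond op; right.
  have [T hT] := gen r er.
  by exists T; apply: conv.
Qed.
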